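(* Let $\mathcal C^*$ be a finite set of points in a metric space with metric $d$, and let $T=(\mathcal V,E,r)$ be a neighborhood tree with $\mathcal V\subseteq\mathcal C^*$. Rank the edges of $T$ as described in the context, let $h$ be the largest rank and $E_{\le i}$ the set of edges of rank at most $i$, $E_i$ the set of rank-$i$ edges. Let $0\le i\le h-1$ and let $\mathcal A$ be the vertex set of a connected component of $(\mathcal V,E_{\le i})$ with $r\notin\mathcal A$. Then $d(\mathcal A,\mathcal C^*\setminus\mathcal A)\ge L'/2$, where $L'$ is the length of a shortest edge in $E_{i+1}$.
   Context: A rooted tree $T=(\mathcal V,E,r)$: vertex set $\mathcal V\subseteq\mathcal C^*$, edge set $E$ forming a tree on $\mathcal V$, root $r$. $\Lambda_T(v)$ is the vertex set of the subtree rooted at $v$; $\rho_T(v)$ is the parent of $v\ne r$. $T$ is a neighborhood tree if for every $v\in\mathcal V\setminus\{r\}$, $d(v,\mathcal C^*\setminus\Lambda_T(v))=d(v,\rho_T(v))$. Here $d(\mathcal X,\mathcal Y)=\min_{a\in\mathcal X,b\in\mathcal Y}d(a,b)$. Edge ranks: edge $e=(v,v')$ has length $L_e=d(v,v')$; sort edges $e_1,\dots,e_{|\mathcal V|-1}$ by nondecreasing length; $e_1$ has rank 1; for $t\ge2$, $e_t$ has the rank of $e_{t-1}$ if $L_{e_t}\le2\sum_{s<t}L_{e_s}$, otherwise that rank plus 1. In the paper $\mathcal C^*$ is the set of client representatives. *)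

(* Defs.v *)
From mathcomp Require Import all_boot all_order all_algebra.
Set Implicit Arguments. Unset Strict Implicit. Unset Printing Implicit Defensive.
Import Order.TTheory GRing.Theory Num.Theory.
Local Open Scope ring_scope.

Section Defs.
Variables (R : realFieldType) (P : finType) (d : P -> P -> R).

(* d is a metric on the finite point set P (= C* ). *)
Definition is_metric : Prop :=
  [/\ forall x y, 0 <= d x y,
      forall x y, d x y = 0 <-> x = y,
      forall x y, d x y = d y x &
      forall x y z, d x z <= d x y + d y z].

(* An upper bound on all distances, used as the (irrelevant) value of the
   distance between empty sets. *)
Definition maxdist : R := \big[Num.max/0]_(x : P) \big[Num.max/0]_(y : P) d x y.

Definition setdist (X Y : {set P}) : R :=
  \big[Num.min/maxdist]_(x in X) \big[Num.min/maxdist]_(y in Y) d x y.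

(* Undirected edges are 2-element subsets of P. *)
Definition adj (E : {set {set P}}) : rel P := fun x y => [set x; y] \in E.

Definition is_rooted_tree (V : {set P}) (E : {set {set P}}) (r : P) : Prop :=
  [/\ r \in V,
      forall e, e \in E -> #|e| = 2%N /\ e \subset V,
      forall u v, u \in V -> v \in V -> connect (adj E) u v &
      #|E| = (#|V| - 1)%N].

(* Lambda_T(v): vertex set of the subtree rooted at v. For v <> r, these are
   the vertices u of V that are separated from r once the edges at v are
   removed (i.e. whose path to r goes through v). *)
Definition subtree (V : {set P}) (E : {set {set P}}) (r v : P) : {set P} :=
  if v == r then V
  else [set u in V | ~~ connect (adj [set e in E | v \notin e]) u r].

Definition is_parent (V : {set P}) (E : {set {set P}}) (r v w : P) : bool :=
  ([set v; w] \in E) && (w \notin subtree V E r v).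

Definition neighborhood_tree (V : {set P}) (E : {set {set P}}) (r : P) : Prop :=
  is_rooted_tree V E r /\
  forall v w, v \in V -> v != r -> is_parent V E r v w ->
    setdist [set v] (~: subtree V E r v) = d v w.

Definition elen (e : {set P}) : R :=
  if enum e is [:: a; b] then d a b else 0.

(* Ranks along a sequence of edges sorted by nondecreasing length. *)
Fixpoint rank_aux (sum : R) (rk : nat) (s : seq {set P}) : seq nat :=
  if s is e :: s' then
    let rk' := if elen e <= 2 * sum then rk else rk.+1 in
    rk' :: rank_aux (sum + elen e) rk' s'
  else [::].

Definition ranks (s : seq {set P}) : seq nat :=
  if s is e :: s' then 1%N :: rank_aux (elen e) 1 s' else [::].

Definition rank (s : seq {set P}) (e : {set P}) : nat := nth 0%N (ranks s) (index e s).

Definition max_rank (s : seq {set P}) : nat := \max_(e <- s) rank s e.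

Definition edges_le (s : seq {set P}) (i : nat) : {set {set P}} :=
  [set e | (e \in s) && (rank s e <= i)%N].
Definition edges_eq (s : seq {set P}) (i : nat) : {set {set P}} :=
  [set e | (e \in s) && (rank s e == i)].

Definition is_component (V : {set P}) (F : {set {set P}}) (A : {set P}) : Prop :=
  exists2 v, v \in V & A = [set u in V | connect (adj F) v u].

End Defs.

(* Main.v *)
Require Import Defs.
From mathcomp Require Import all_boot all_order all_algebra.
From mathcomp Require Import lra.
Import Order.TTheory GRing.Theory Num.Theory.
Local Open Scope ring_scope.

Set Implicit Arguments. Unset Strict Implicit.

Lemma size_rank_aux (R : realFieldType) (P : finType) (d : P -> P -> R) s sum rk :
  size (rank_aux d sum rk s) = size s.
Proof. by elim: s sum rk => //= e s IH sum rk; rewrite IH. Qed.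

Lemma rank_aux_ge (R : realFieldType) (P : finType) (d : P -> P -> R) s sum rk j :
  (j < size s)%N -> (rk <= nth 0%N (rank_aux d sum rk s) j)%N.
Proof.
elim: s sum rk j => //= e s IH sum rk [|j] /=.
  by case: ifP => // _; rewrite leqnSn.
rewrite ltnS => /IH => H; apply: leq_trans (H _ _).
by case: ifP => // _; rewrite leqnSn.
Qed.

Definition lsum (R : realFieldType) (P : finType) (d : P -> P -> R) s rs k :=
  \sum_(0 <= j < size s) (if (nth 0%N rs j <= k)%N then elen d (nth set0 s j) else 0).

Lemma rankA (R : realFieldType) (P : finType) (d : P -> P -> R) s sum rk k t :
  sorted (fun e f => elen d e <= elen d f) s -> (rk <= k)%N -> (t < size s)%N ->
  (k < nth 0%N (rank_aux d sum rk s) t)%N ->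
  2 * (sum + lsum d s (rank_aux d sum rk s) k) < elen d (nth set0 s t).
Proof.
elim: s sum rk t => //= e s IH sum rk t Hs Hk Ht.
rewrite /lsum /= big_nat_recl //=.
set rk' := (if elen d e <= 2 * sum then rk else rk.+1).
have Hrk' : (rk' <= rk.+1)%N by rewrite /rk'; case: ifP.
have Hall : (k < rk')%N -> (\sum_(0 <= j < size s)
   (if (nth 0%N (rank_aux d (sum + elen d e) rk' s) j <= k)%N
    then elen d (nth set0 s j) else 0)) = 0.
  move=> Hlt; rewrite big_nat big1 // => j /andP[_ Hj].
  by rewrite leqNgt (leq_trans Hlt (rank_aux_ge _ _ _ Hj)).
have Hjump : (k < rk')%N -> 2 * sum < elen d e.
  rewrite /rk'; case: ifP => H; first by rewrite ltnNge Hk.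
  by move=> _; rewrite ltNge H.
case: t Ht => [_|t] /=.
  move=> Hlt; rewrite leqNgt Hlt add0r Hall // addr0; exact: Hjump.
rewrite ltnS => Ht Hlt.
have Hs' : sorted (fun e f => elen d e <= elen d f) s := path_sorted Hs.
case: (leqP rk' k) => Hrk.
  rewrite addrA; exact: IH.
rewrite add0r Hall // addr0.
apply: lt_le_trans (Hjump Hrk) _.
have /allP := order_path_min (fun y x z => @le_trans _ _ (elen d y) (elen d x) (elen d z)) Hs.
by apply; rewrite mem_nth.
Qed.


Lemma elen_ge0 (R : realFieldType) (P : finType) (d : P -> P -> R) e :
  is_metric d -> 0 <= elen d e.
Proof. by case=> H0 _ _ _; rewrite /elen; case: (enum e) => [|a [|b [|]]]. Qed.

Lemma term_le_sum (R : realFieldType) (F : nat -> R) n t :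
  (forall j, 0 <= F j) -> (t < n)%N -> F t <= \sum_(0 <= j < n) F j.
Proof.
move=> H0 Ht; rewrite big_mkord (bigD1 (Ordinal Ht)) //= lerDl.
by apply: sumr_ge0 => j _.
Qed.

Lemma W_lsum (R : realFieldType) (P : finType) (d : P -> P -> R) s i :
  uniq s ->
  \sum_(e in edges_le d s i) elen d e = lsum d s (ranks d s) i.
Proof.
move=> Us.
have -> : \sum_(e in edges_le d s i) elen d e =
          \sum_(e <- s) (if (rank d s e <= i)%N then elen d e else 0).
  rewrite [RHS]big_uniq // big_mkcond [RHS]big_mkcond /=.
  by apply: eq_bigr => e _; rewrite inE; case: (e \in s).
rewrite (big_nth set0) /lsum; apply: eq_big_nat => j /andP[_ Hj].
by rewrite /rank index_uniq.
Qed.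

Lemma rank_cons (R : realFieldType) (P : finType) (d : P -> P -> R) e1 s' e :
  e1 != e -> rank d (e1 :: s') e = nth 0%N (rank_aux d (elen d e1) 1 s') (index e s').
Proof. by rewrite /rank /ranks /= => /negPf ->. Qed.

Lemma rank_head (R : realFieldType) (P : finType) (d : P -> P -> R) e1 s' :
  rank d (e1 :: s') e1 = 1%N.
Proof. by rewrite /rank /ranks /= eqxx. Qed.

Lemma lsum0 (R : realFieldType) (P : finType) (d : P -> P -> R) s' x :
  lsum d s' (rank_aux d x 1 s') 0 = 0.
Proof.
rewrite /lsum big_nat big1 // => j /andP[_ Hj].
by rewrite leqNgt (rank_aux_ge d x 1 Hj).
Qed.

Lemma rank_facts (R : realFieldType) (P : finType) (d : P -> P -> R)
  (E : {set {set P}}) s i e0 :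
  is_metric d -> perm_eq s (enum E) ->
  sorted (fun e f => elen d e <= elen d f) s ->
  e0 \in edges_eq d s i.+1 ->
  (forall e, e \in edges_eq d s i.+1 -> elen d e0 <= elen d e) ->
  2 * (\sum_(e in edges_le d s i) elen d e) <= elen d e0 /\
  (forall e, e \in E -> e \notin edges_le d s i -> elen d e0 <= elen d e).
Proof.
move=> Hm Hp Hs He0 Hmin.
have Us : uniq s by rewrite (perm_uniq Hp) enum_uniq.
have memS e : (e \in s) = (e \in E) by rewrite (perm_mem Hp) mem_enum.
rewrite W_lsum //.
move: He0; rewrite inE => /andP[e0s /eqP rk0].
case: s Hp Hs Us memS e0s rk0 Hmin => [|e1 s'] Hp Hs Us memS e0s rk0 Hmin //.
set rs := rank_aux d (elen d e1) 1 s'.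
have ge0 k : 0 <= lsum d s' rs k.
  by apply: sumr_ge0 => j _; case: ifP => _ //; apply: elen_ge0.
have Hs' : sorted (fun e f => elen d e <= elen d f) s' := path_sorted Hs.
have Wdef k : lsum d (e1 :: s') (ranks d (e1 :: s')) k =
   (if (1 <= k)%N then elen d e1 else 0) + lsum d s' rs k.
  by rewrite /lsum /ranks big_nat_recl.
have tr : transitive (fun e f => elen d e <= elen d f).
  by move=> y x z; apply: le_trans.
have head_min e : e \in e1 :: s' -> elen d e1 <= elen d e.
  rewrite inE => /orP[/eqP -> //|].
  by have /allP := order_path_min tr Hs; apply.
have memE e : e \in E -> e \in e1 :: s' by rewrite memS.
rewrite Wdef.
case: (eqVneq e1 e0) => [E10|ne1].
  subst e0; rewrite rank_head in rk0; move/eqP: rk0; rewrite eqSS => /eqP i0; rewrite -i0.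
  rewrite /= lsum0 addr0 mulr0 elen_ge0 //; split => // e eE _.
  exact/head_min/memE.
have e0s' : e0 \in s' by move: e0s; rewrite inE eq_sym (negPf ne1).
have Ht0 : (index e0 s' < size s')%N by rewrite index_mem.
rewrite rank_cons // in rk0.
split.
  case: (posnP i) => [i0|ipos].
    by rewrite i0 /= lsum0 addr0 mulr0 elen_ge0.
  apply: ltW.
  have := rankA (sum := elen d e1) (rk := 1) (k := i) Hs' ipos Ht0.
  by rewrite -/rs rk0 (nth_index _ e0s') ltnSn; apply.
move=> e eE eF.
have es : e \in e1 :: s' := memE e eE.
move: eF; rewrite inE es /= -ltnNge => Hr.
case: (eqVneq (rank d (e1 :: s') e) i.+1) => [Hi|Hi].
  by apply: Hmin; rewrite inE es Hi eqxx.
have Hr' : (i.+1 < rank d (e1 :: s') e)%N by rewrite ltn_neqAle eq_sym Hi Hr.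
have ne : e1 != e.
  by apply/eqP => E1; move: Hr'; rewrite -E1 rank_head.
have es' : e \in s' by move: es; rewrite inE eq_sym (negPf ne).
have Hte : (index e s' < size s')%N by rewrite index_mem.
rewrite rank_cons // in Hr'.
have := rankA (sum := elen d e1) (rk := 1) (k := i.+1) Hs' (isT : (1 <= i.+1)%N) Hte Hr'.
rewrite (nth_index _ es') => Hlt.
have Hle : elen d e0 <= lsum d s' rs i.+1.
  have := @term_le_sum R (fun j => if (nth 0%N rs j <= i.+1)%N
    then elen d (nth set0 s' j) else 0) (size s') _ _ Ht0.
  rewrite /= rk0 leqnn (nth_index _ e0s'); apply.
  by move=> j; case: ifP => _ //; apply: elen_ge0.
apply: le_trans Hle _; apply: ltW; apply: le_lt_trans Hlt.
have h1 := elen_ge0 e1 Hm; have h2 := ge0 i.+1.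
lra.
Qed.


Lemma my_bigmin_le (R : realFieldType) (I : eqType) (md : R) (s : seq I) (Pr : pred I)
   (f : I -> R) x :
  x \in s -> Pr x -> \big[Num.min/md]_(y <- s | Pr y) f y <= f x.
Proof.
elim: s => //= y s IH; rewrite inE big_cons => /orP[/eqP <- -> | xs Px].
  by rewrite ge_min lexx.
case: ifP => _; last exact: IH.
by rewrite ge_min IH ?orbT.
Qed.

Lemma my_bigmax_ge (R : realFieldType) (I : eqType) (s : seq I) (f : I -> R) x :
  x \in s -> f x <= \big[Num.max/0]_(y <- s) f y.
Proof.
elim: s => //= y s IH; rewrite inE big_cons => /orP[/eqP <-|xs].
  by rewrite le_max lexx.
by rewrite le_max IH ?orbT.
Qed.

Lemma my_bigmax_ge0 (R : realFieldType) (I : eqType) (s : seq I) (f : I -> R) :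
  (forall x, 0 <= f x) -> 0 <= \big[Num.max/0]_(y <- s) f y.
Proof.
move=> H; elim: s => [|y s IH]; first by rewrite big_nil.
by rewrite big_cons le_max IH orbT.
Qed.

Lemma maxdist_ge (R : realFieldType) (P : finType) (d : P -> P -> R) x y :
  is_metric d -> d x y <= maxdist d.
Proof.
move=> [H0 _ _ _]; rewrite /maxdist.
apply: le_trans (my_bigmax_ge _ (mem_index_enum x)).
exact: my_bigmax_ge (mem_index_enum y).
Qed.

Lemma bigmax0_ge0 (R : realFieldType) (I : Type) (s : seq I) (f : I -> R) :
  0 <= \big[Num.max/0]_(y <- s) f y.
Proof.
elim: s => [|y s IH]; first by rewrite big_nil.
by rewrite big_cons le_max IH orbT.
Qed.

Lemma maxdist_ge0 (R : realFieldType) (P : finType) (d : P -> P -> R) :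
  0 <= maxdist d.
Proof.
rewrite /maxdist; exact: bigmax0_ge0.
Qed.

Lemma maxdist_elen (R : realFieldType) (P : finType) (d : P -> P -> R) e :
  is_metric d -> elen d e <= maxdist d.
Proof.
move=> Hm; rewrite /elen; case: (enum e) => [|a [|b [|]]] //; try exact: maxdist_ge;
  by rewrite maxdist_ge0.
Qed.

Lemma setdist_le1 (R : realFieldType) (P : finType) (d : P -> P -> R) c (X : {set P}) z :
  z \in X -> setdist d [set c] X <= d c z.
Proof.
move=> zX; rewrite /setdist.
apply: le_trans (my_bigmin_le (maxdist d) (fun x => \big[Num.min/maxdist d]_(y in X) d x y) (mem_index_enum c) _) _.
  by rewrite in_set1.
exact: my_bigmin_le (mem_index_enum z) zX.
Qed.

Lemma setdist_ge (R : realFieldType) (P : finType) (d : P -> P -> R) (X Y : {set P}) m :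
  m <= maxdist d -> (forall x y, x \in X -> y \in Y -> m <= d x y) ->
  m <= setdist d X Y.
Proof.
move=> Hm H; rewrite /setdist.
apply: (big_ind (fun v => m <= v)) => //; first by move=> u v; rewrite le_min => -> ->.
move=> x xX; apply: (big_ind (fun v => m <= v)) => //.
  by move=> u v; rewrite le_min => -> ->.
by move=> y yY; apply: H.
Qed.


Lemma adj_sym (P : finType) (E : {set {set P}}) : symmetric (adj E).
Proof. by move=> x y; rewrite /adj setUC. Qed.

Lemma upath (T : finType) (e : rel T) x y :
  connect e x y -> exists p, [/\ uniq (x :: p), path e x p & last x p = y].
Proof.
move=> /connectP[p Hp ->]; case: (shortenP Hp) => p' Hp' Up' _.
by exists p'.
Qed.

Lemma cut (P : finType) (F E : {set {set P}}) x p y :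
  uniq (x :: p) -> path (adj E) x p -> y \in x :: p -> ~~ connect (adj F) x y ->
  exists c w t, [/\ connect (adj F) x c, adj E c w, ~~ adj F c w &
    path (adj E) w t] /\ [/\ c \notin w :: t, last x p = last w t & y \in w :: t].
Proof.
elim: p x => [|z p IH] x Ux Hp Hy Hc.
  by move: Hy Hc; rewrite inE => /eqP ->; rewrite connect0.
have yx : y != x by apply: contraNneq Hc => ->; rewrite connect0.
have yz : y \in z :: p by move: Hy; rewrite inE (negPf yx).
move: Hp => /= /andP[Exz Hp].
case Fxz: (adj F x z).
  have Hcz : ~~ connect (adj F) z y.
    by apply: contra Hc => Hzy; apply: connect_trans (connect1 Fxz) Hzy.
  have Uz : uniq (z :: p) by case/andP: Ux.
  have [c [w [t [[H1 H2 H3 H4] [H5 H6 H7]]]]] := IH z Uz Hp yz Hcz.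
  exists c, w, t; split; split => //; exact: connect_trans (connect1 Fxz) H1.
exists x, z, p; split; split; rewrite ?connect0 ?Fxz //; by case/andP: Ux.
Qed.

Definition avoidE (P : finType) (E : {set {set P}}) (c : P) := [set e in E | c \notin e].

Lemma adj_avoid (P : finType) (E : {set {set P}}) c u v :
  adj E u v -> u != c -> v != c -> adj (avoidE E c) u v.
Proof.
move=> H uc vc; rewrite /adj in H; rewrite /adj /avoidE inE H in_set2 !(eq_sym c) (negPf uc) (negPf vc) //.
Qed.

Lemma avoid_conn (P : finType) (E : {set {set P}}) c w t z :
  path (adj E) w t -> c \notin w :: t -> z \in w :: t ->
  connect (adj (avoidE E c)) z (last w t).
Proof.
move=> Hp Hc Hz.
have Hp' : path (adj (avoidE E c)) w t.
  apply: (sub_in_path (P := [pred v | v != c])) Hp.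
    by move=> u v uc vc H; apply: adj_avoid.
  by apply/allP => v Hv; apply: contraNneq Hc => <-.
have sym := sym_connect_sym (@adj_sym P (avoidE E c)).
have H1 : connect (adj (avoidE E c)) w (last w t) := path_connect Hp' (mem_last w t).
have H2 : connect (adj (avoidE E c)) w z := path_connect Hp' Hz.
rewrite sym in H2; exact: connect_trans H2 H1.
Qed.


Lemma elen2 (R : realFieldType) (P : finType) (d : P -> P -> R) x y :
  is_metric d -> x != y -> elen d [set x; y] = d x y.
Proof.
move=> [_ _ Hsym _] xy.
have Hs : size (enum [set x; y]) = 2%N by rewrite -cardE cards2 xy.
have U := enum_uniq (pred_of_set [set x; y]).
have Hm z : (z \in enum [set x; y]) = (z == x) || (z == y) by rewrite mem_enum in_set2.
move: Hs U Hm; rewrite /elen; case: (enum _) => [|a [|b [|]]] // _ /= U Hm.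
have Ha : (a == x) || (a == y) by rewrite -Hm mem_head.
have Hb : (b == x) || (b == y) by rewrite -Hm !inE eqxx orbT.
have ab : a != b by move: U; rewrite !inE andbT.
case/orP: Ha => /eqP Ha; case/orP: Hb => /eqP Hb; subst a b.
- by rewrite eqxx in ab.
- by [].
- by rewrite Hsym.
- by rewrite eqxx in ab.
Qed.

Lemma sum_sub (R : realFieldType) (I : finType) (P1 P2 : pred I) (f : I -> R) :
  (forall e, P1 e -> P2 e) -> (forall e, 0 <= f e) ->
  \sum_(e | P1 e) f e <= \sum_(e | P2 e) f e.
Proof.
move=> H H0; rewrite [X in X <= _]big_mkcond [X in _ <= X]big_mkcond /=.
apply: ler_sum => e _; case: ifP => [/H -> //|_]; by case: ifP.
Qed.

Lemma dist_path (R : realFieldType) (P : finType) (d : P -> P -> R) (F : {set {set P}}) x p :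
  is_metric d -> (forall e, e \in F -> #|e| = 2%N) -> uniq (x :: p) -> path (adj F) x p ->
  d x (last x p) <= \sum_(e in F | e \subset [set z in x :: p]) elen d e.
Proof.
move=> Hm HF; have [H0 H00 Hsym Htri] := Hm.
elim: p x => [|y p IH] x Ux Hp /=.
  have -> : d x x = 0 by apply/H00.
  by apply: sumr_ge0 => e _; apply: elen_ge0.
move: Hp => /= /andP[Fxy Hp].
have xy : x != y.
  by have := HF _ Fxy; rewrite cards2; case: (x != y).
have Uy : uniq (y :: p) by case/andP: Ux.
have xnot : x \notin y :: p by case/andP: Ux.
apply: le_trans (Htri x y _) _.
rewrite (bigD1 [set x; y]) /=; last first.
  rewrite -/(adj F x y) Fxy /=; apply/subsetP => z; rewrite in_set2 => /orP[/eqP->|/eqP->];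
  by rewrite inE !inE eqxx ?orbT.
rewrite -(elen2 Hm xy); apply: lerD => //.
apply: le_trans (IH y Uy Hp) _.
apply: sum_sub; last by move=> e; apply: elen_ge0.
move=> e /andP[eF esub]; rewrite eF /=; apply/andP; split.
  apply: subset_trans esub _; apply/subsetP => z; rewrite !inE => ->; by rewrite orbT.
apply: contraNneq xnot => ee; have : x \in e by rewrite ee in_set2 eqxx.
by move/(subsetP esub); rewrite inE.
Qed.

Lemma dist_conn (R : realFieldType) (P : finType) (d : P -> P -> R) (F : {set {set P}}) x y :
  is_metric d -> (forall e, e \in F -> #|e| = 2%N) -> connect (adj F) x y ->
  d x y <= \sum_(e in F) elen d e.
Proof.
move=> Hm HF /upath[p [Up Hp <-]].
apply: le_trans (dist_path Hm HF Up Hp) _.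
apply: sum_sub; last by move=> e; apply: elen_ge0.
by move=> e /andP[].
Qed.


Unset Implicit Arguments. Set Strict Implicit.

Theorem claim4 (R : realFieldType) (P : finType) (d : P -> P -> R)
  (V : {set P}) (E : {set {set P}}) (r : P)
  (s : seq {set P}) (i : nat) (A : {set P}) (e0 : {set P}) :
  is_metric d ->
  neighborhood_tree d V E r ->
  perm_eq s (enum E) ->
  sorted (fun e f => elen d e <= elen d f) s ->
  (i < max_rank d s)%N ->
  is_component V (edges_le d s i) A ->
  r \notin A ->
  e0 \in edges_eq d s i.+1 ->
  (forall e, e \in edges_eq d s i.+1 -> elen d e0 <= elen d e) ->
  elen d e0 / 2 <= setdist d A (~: A).
Proof.
move=> Hm [Htree Hnb] Hp Hs _ Hcomp rA e0in Hmin.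
have [HW HG] := rank_facts Hm Hp Hs e0in Hmin.
have [H0 H00 Hsym Htri] := Hm.
set F := edges_le d s i in HW HG Hcomp.
set W := \sum_(e in F) elen d e in HW.
set L := elen d e0 in HW HG *.
have FE e : e \in F -> e \in E.
  by rewrite inE => /andP[es _]; rewrite (perm_mem Hp) mem_enum in es.
case: Htree => rV Hedge Hconn _.
have HF2 e : e \in F -> #|e| = 2%N by move=> /FE /Hedge [].
have L0 : 0 <= L by apply: elen_ge0.
have dW x y : connect (adj F) x y -> d x y <= W by apply: dist_conn.
case: Hcomp => v0 v0V Adef.
have symF := sym_connect_sym (@adj_sym P F).
have adjEV u w : adj E u w -> u \in V.
  move=> /Hedge [_ /subsetP]; apply; by rewrite in_set2 eqxx.
have parent c w : adj E c w -> ~~ adj F c w -> c != r ->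
    connect (adj (avoidE E c)) w r -> forall z, z \notin subtree V E r c -> L <= d c z.
  move=> Ecw nFcw cr wr z zn.
  have cV := adjEV _ _ Ecw.
  have Hpar : is_parent V E r c w.
    rewrite /is_parent; apply/andP; split; first exact: Ecw.
    by rewrite /subtree (negPf cr) inE negb_and negbK wr orbT.
  have Hd := Hnb c w cV cr Hpar.
  have cw : c != w by have := Hedge _ Ecw; rewrite cards2; case: (c != w) => -[].
  have Lcw : L <= d c w by rewrite -(elen2 Hm cw); apply: HG.
  apply: le_trans Lcw _; rewrite -Hd; apply: setdist_le1; by rewrite inE.
apply: setdist_ge.
  apply: le_trans (maxdist_elen e0 Hm); rewrite -/L; lra.
move=> a b aA bnA; rewrite inE in bnA.
move: (aA); rewrite Adef inE => /andP[aV Hv0a].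
have [p [Up Hp' Hl]] := upath (Hconn a r aV rV).
have nFar : ~~ connect (adj F) a r.
  apply/negP => Far; move/negP: rA; apply; rewrite Adef inE rV.
  exact: connect_trans Hv0a Far.
have rin : r \in a :: p by rewrite -Hl mem_last.
have [v [w [t [[Fav Evw nFvw Pwt] [vnot Hlast _]]]]] := cut Up Hp' rin nFar.
have lastr : last w t = r by rewrite -Hlast Hl.
have vr : v != r by apply: contraNneq vnot => ->; rewrite -lastr mem_last.
have wr : connect (adj (avoidE E v)) w r.
  by rewrite -lastr; apply: avoid_conn Pwt vnot (mem_head _ _).
have Pv := parent v w Evw nFvw vr wr.
have dav : d a v <= W := dW _ _ Fav.
case: (boolP (b \in subtree V E r v)) => bsub; last first.
  have := Pv b bsub; have := Htri v a b; rewrite (Hsym v a); lra.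
move: bsub; rewrite /subtree (negPf vr) inE => /andP[bV nconn].
have [q [Uq Hq Hlq]] := upath (Hconn b r bV rV).
have vin : v \in b :: q.
  apply/negPn/negP => vnq; apply: (negP nconn); rewrite -Hlq; apply/connectP.
  exists q => //; apply: (sub_in_path (P := [pred z | z != v])) Hq.
    by move=> u z uv zv H; apply: adj_avoid.
  by apply/allP => z zin; apply: contraNneq vnq => <-.
have nFbv : ~~ connect (adj F) b v.
  apply/negP => Fbv; move/negP: bnA; apply; rewrite Adef inE bV.
  apply: connect_trans Hv0a (connect_trans Fav _); by rewrite symF.
have [c [w' [t' [[Fbc Ecw nFcw Pwt'] [cnot Hlast' vin']]]]] := cut Uq Hq vin nFbv.
have lastr' : last w' t' = r by rewrite -Hlast' Hlq.
have cr : c != r by apply: contraNneq cnot => ->; rewrite -lastr' mem_last.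
have wr' : connect (adj (avoidE E c)) w' r.
  by rewrite -lastr'; apply: avoid_conn Pwt' cnot (mem_head _ _).
have vr' : connect (adj (avoidE E c)) v r.
  by rewrite -lastr'; apply: avoid_conn Pwt' cnot vin'.
have Pc := parent c w' Ecw nFcw cr wr'.
have anot : a \notin subtree V E r c.
  rewrite /subtree (negPf cr) inE negb_and negbK; apply/orP; right.
  apply: connect_trans _ vr'.
  move: Fav => /connectP[pa Hpa ->]; have Hpa2 := Hpa; apply/connectP; exists pa => //.
  apply: (sub_in_path (P := [pred z | z != c])) Hpa.
    by move=> u z uc zc H; apply: adj_avoid => //; apply: FE.
  apply/allP => z zin; apply/negP => /eqP zc; subst z.
  move/negP: bnA; apply; rewrite Adef inE bV.
  apply: connect_trans Hv0a (connect_trans (path_connect Hpa2 zin) _).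
  by rewrite symF.
have := Pc a anot.
have dbc : d c b <= W by rewrite Hsym; apply: dW.
have := Htri c b a; rewrite (Hsym b a); lra.
Qed.
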